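(* Let $a, b, b'$ be complex numbers and $A>0$ such that $|b' - b| \le 1$ and $|a| e^{|b|} \le A$. Then $$\| Y(b) X(a) Y(-b) - Y(b') X(a) Y(-b') \| \le 10\, e^{A} |a|\, e^{|b|}\, |b' - b|.$$
   Context: For $U \in \mathfrak{sl}_2(\mathbb{C})$ and $t\in\mathbb{C}$, $U(t) = \exp(tU)$. $X = \begin{pmatrix} 1/2 & 0 \\ 0 & -1/2 \end{pmatrix}$, $\theta = \begin{pmatrix} 0 & -1/2 \\ 1/2 & 0\end{pmatrix}$, $Y = \exp(\tfrac{\pi}{2}\theta) X \exp(-\tfrac{\pi}{2}\theta)$. $\|\cdot\|$ is the operator norm on $M_2(\mathbb{C})$ with respect to the standard Hermitian norm. *)

(* Defs.v *)
From HB Require Import structures.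
From mathcomp Require Import all_boot all_order all_algebra.
From mathcomp Require Import all_classical all_reals all_analysis.
From mathcomp Require Import complex.
Set Implicit Arguments. Unset Strict Implicit. Unset Printing Implicit Defensive.
Import Order.TTheory GRing.Theory Num.Theory.
Import numFieldNormedType.Exports.
Local Open Scope ring_scope.
Local Open Scope classical_set_scope.

Section Defs.
Variable R : realType.
Local Notation C := R[i].

Definition cabs (z : C) : R := ComplexField.Normc.normc z.

Definition mexp (M : 'M[C]_2) : 'M[C]_2 :=
  limn (series (fun k : nat => (k`!%:R)^-1 *: M ^+ k)).

Definition oneparam (U : 'M[C]_2) (t : C) : 'M[C]_2 := mexp (t *: U).

Definition hnorm (v : 'cV[C]_2) : R := Num.sqrt (\sum_i cabs (v i 0) ^+ 2).

Definition opnorm (M : 'M[C]_2) : R :=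
  sup [set hnorm (M *m v) | v in [set v : 'cV[C]_2 | hnorm v = 1]].

Definition Xm : 'M[C]_2 :=
  \matrix_(i < 2, j < 2)
    (if i == j then (if i == 0 then 2%:R^-1 else - 2%:R^-1) else 0).

Definition thetam : 'M[C]_2 :=
  \matrix_(i < 2, j < 2)
    (if i == j then 0 else (if i == 0 then - 2%:R^-1 else 2%:R^-1)).

Definition Ym : 'M[C]_2 :=
  mexp ((((pi : R) / 2)%:C)%C *: thetam) *m Xm *m mexp (((- ((pi : R) / 2))%:C)%C *: thetam).

End Defs.

(* Main.v *)
Require Import Defs.
From HB Require Import structures.
From mathcomp Require Import all_boot all_order all_algebra.
From mathcomp Require Import all_classical all_reals all_analysis.
From mathcomp Require Import complex.
From mathcomp Require Import ring lra.
Set Implicit Arguments. Unset Strict Implicit. Unset Printing Implicit Defensive.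
Import Order.TTheory GRing.Theory Num.Theory.
Import numFieldNormedType.Exports.
Local Open Scope ring_scope.

Ltac mx2 := apply/matrixP => -[[|[|?]] ?] -[[|[|?]] ?] //;
  rewrite ?(mxE, big_ord_recl, big_ord0) //=.

Section chunk_c1.

Section Cauchy.
Variable F : numFieldType.
Implicit Types a b : F.

Definition Pe n a : F := \sum_(k < n) a ^+ k / k`!%:R.
Definition ff a b i j : F := a ^+ i / i`!%:R * (b ^+ j / j`!%:R).
Definition Dn n a b : F := \sum_(0 <= i < n) \sum_(n - i <= j < n) ff a b i j.

Lemma fact_neq0 n : (n`!%:R : F) != 0.
Proof. by rewrite pnatr_eq0 -lt0n fact_gt0. Qed.

Lemma binom_term a b n :
  (a + b) ^+ n / n`!%:R = \sum_(0 <= i < n.+1) ff a b i (n - i).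
Proof.
rewrite addrC exprDn big_mkord mulr_suml; apply: eq_bigr => i _.
rewrite /ff.
have hi : (i <= n)%N by rewrite -ltnS.
have := bin_fact hi => /(congr1 (fun m => m%:R : F)).
rewrite !natrM => e.
rewrite -mulr_natr.
apply: (@mulIf _ (n`!%:R)); first exact: fact_neq0.
rewrite -e.
field.
by rewrite !fact_neq0 pnatr_eq0 -lt0n bin_gt0 hi.
Qed.

Lemma Pe_low n a b :
  Pe n (a + b) = \sum_(0 <= i < n) \sum_(0 <= j < n - i) ff a b i j.
Proof.
elim: n => [|n IH]; first by rewrite /Pe !big_ord0 big_geq.
rewrite /Pe big_ord_recr /= -/(Pe n (a + b)) IH binom_term.
rewrite [RHS]big_nat_recr //= subSnn big_nat1.
rewrite big_nat_recr //= subnn addrA; congr (_ + _).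
rewrite -big_split /=; apply: eq_big_nat => i /andP[_ hi].
by rewrite subSn ?(ltnW hi) // big_nat_recr //= leq0n.
Qed.

Lemma Pe_cauchy n a b : Pe n a * Pe n b - Pe n (a + b) = Dn n a b.
Proof.
rewrite Pe_low /Pe /Dn mulr_suml big_mkord.
rewrite [X in X - _](_ : _ = \sum_(i < n) (\sum_(0 <= j < n - i) ff a b i j +
    \sum_(n - i <= j < n) ff a b i j)).
  by rewrite big_split /= [RHS]big_mkord addrAC subrr add0r.
apply: eq_bigr => i _; rewrite -big_cat_nat ?leq_subr //.
rewrite mulr_sumr big_mkord; apply: eq_bigr => j _; by [].
Qed.
End Cauchy.

End chunk_c1.

Section chunk_c2.
Local Open Scope classical_set_scope.
Local Open Scope complex_scope.
Lemma Dn_norm (F : numFieldType) n (a b : F) : `|Dn n a b| <= Dn n `|a| `|b|.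
Proof.
rewrite /Dn; apply: le_trans (ler_norm_sum _ _ _) _; apply: ler_sum => i _.
apply: le_trans (ler_norm_sum _ _ _) _; apply: ler_sum => j _.
by rewrite /ff !normrM !normfV !normr_nat !normrX.
Qed.

Lemma Pe_morph (F G : numFieldType) (f : {rmorphism F -> G}) n a :
  f (Pe n a) = Pe n (f a).
Proof.
rewrite /Pe rmorph_sum; apply: eq_bigr => k _.
by rewrite rmorphM rmorphXn fmorphV rmorph_nat.
Qed.

Section Cx.
Variable R : realType.
Local Notation C := (Num.NumField.sort (R[i] : numFieldType)).

Lemma normCE (z : C) : `|z| = (ComplexField.Normc.normc z)%:C.
Proof. by []. Qed.

Lemma normcR (x : R) : ComplexField.Normc.normc (x%:C) = `|x|.
Proof. by rewrite /ComplexField.Normc.normc /= expr0n addr0 sqrtr_sqr. Qed.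

Lemma cvgC0 (f : nat -> C) (g : nat -> R) :
  (forall n, ComplexField.Normc.normc (f n) <= g n) -> g @ \oo --> (0:R) -> f @ \oo --> (0:C).
Proof.
move=> hfg /cvgrPdist_lt hg; apply/cvgrPdist_lt => e e0.
move: (e0); rewrite ltcE /= => /andP[/eqP Ime Ree].
move: (hg (complex.Re e) Ree); apply: filterS => n hn.
rewrite sub0r normrN normCE ltcE /= Ime eqxx /=.
apply: le_lt_trans (hfg n) _.
apply: le_lt_trans hn; rewrite sub0r normrN; exact: ler_norm.
Qed.

Lemma cvgC (u : nat -> R) (l : R) : u @ \oo --> l -> (fun n => ((u n)%:C : C)) @ \oo --> (l%:C : C).
Proof.
move=> hu; apply/cvgrPdist_lt => e e0.
move: (e0); rewrite ltcE /= => /andP[/eqP Ime Ree].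
move/cvgrPdist_lt : hu => /(_ (complex.Re e) Ree); apply: filterS => n hn.
by rewrite -rmorphB normCE normcR ltcE /= Ime eqxx /=.
Qed.
End Cx.

End chunk_c2.

Section chunk_c3.
Local Open Scope classical_set_scope.
Local Open Scope complex_scope.

Lemma Dn_morph (F G : numFieldType) (f : {rmorphism F -> G}) n a b :
  f (Dn n a b) = Dn n (f a) (f b).
Proof.
rewrite /Dn rmorph_sum; apply: eq_bigr => i _.
rewrite rmorph_sum; apply: eq_bigr => j _.
by rewrite /ff !rmorphM !rmorphXn !fmorphV !rmorph_nat.
Qed.

Section Cx.
Variable R : realType.
Local Notation C := (Num.NumField.sort (R[i] : numFieldType)).
Local Notation nc := (@ComplexField.Normc.normc R).

Lemma Pe_exp (x : R) : (fun n => Pe n x) @ \oo --> expR x.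
Proof.
have -> : (fun n => Pe n x) = series (exp_coeff x).
  by apply/funext => n; rewrite /series /= big_mkord.
exact: is_cvg_series_exp_coeff.
Qed.

Lemma iexp_even (y : R) m :
  ('i * y%:C)^+(m.*2) / (m.*2)`!%:R = (cos_coeff y m.*2)%:C + 'i * (sin_coeff y m.*2)%:C :> C.
Proof.
rewrite sin_coeff_even /cos_coeff /= odd_double doubleK /=.
rewrite !rmorphM /= fmorphV /= !rmorphXn /= rmorphN rmorph1 !rmorph_nat.
rewrite exprMn -mul2n exprM sqr_i mul2n; ring.
Qed.

Lemma iexp_odd (y : R) m :
  ('i * y%:C)^+(m.*2.+1) / (m.*2.+1)`!%:R = (cos_coeff y m.*2.+1)%:C + 'i * (sin_coeff y m.*2.+1)%:C :> C.
Proof.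
rewrite cos_coeff_odd /sin_coeff /= odd_double doubleK /=.
rewrite !rmorphM /= fmorphV /= !rmorphXn /= rmorphN rmorph1 !rmorph_nat.
rewrite exprMn exprS -mul2n exprM sqr_i mul2n; ring.
Qed.

Lemma iexp_coeff (y : R) k :
  ('i * y%:C)^+k / k`!%:R = (cos_coeff y k)%:C + 'i * (sin_coeff y k)%:C :> C.
Proof.
have := odd_double_half k; case: (odd k) => /= <-.
  rewrite add1n; exact: iexp_odd.
rewrite add0n; exact: iexp_even.
Qed.

Lemma Pe_cis (y : R) : (fun n => Pe n ('i * y%:C : C)) @ \oo -->
   ((cos y)%:C + 'i * (sin y)%:C : C).
Proof.
have -> : (fun n => Pe n ('i * y%:C : C)) =
   (fun n => (series (cos_coeff y) n)%:C + 'i * (series (sin_coeff y) n)%:C).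
  apply/funext => n; rewrite /Pe /series /= !big_mkord !rmorph_sum mulr_sumr -big_split /=.
  by apply: eq_bigr => k _; rewrite iexp_coeff.
apply: cvgD; first apply: cvgC.
  have -> : cos y = lim (series (cos_coeff y) @ \oo) by rewrite unlock.
  exact: is_cvg_series_cos_coeff.
apply: cvgMr; apply: cvgC.
have -> : sin y = lim (series (sin_coeff y) @ \oo) by rewrite unlock.
exact: is_cvg_series_sin_coeff.
Qed.

End Cx.

End chunk_c3.

Section chunk_c4.
Local Open Scope classical_set_scope.
Local Open Scope complex_scope.

Section Cx.
Variable R : realType.
Local Notation C := (Num.NumField.sort (R[i] : numFieldType)).
Local Notation nc := (@ComplexField.Normc.normc R).

Definition Ez (z : C) : C := (expR (complex.Re z) * cos (complex.Im z)) +i*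
   (expR (complex.Re z) * sin (complex.Im z)).

Lemma Dn_real0 (s t : R) : (fun n => Dn n s t) @ \oo --> (0:R).
Proof.
have -> : (fun n => Dn n s t) = (fun n => Pe n s * Pe n t - Pe n (s + t)).
  by apply/funext => n; rewrite Pe_cauchy.
rewrite -(subrr (expR (s + t))) [X in _ --> X - _]expRD.
apply: cvgB; [apply: cvgM|]; exact: Pe_exp.
Qed.

Lemma ncM (a b : C) : nc (a * b) = nc a * nc b.
Proof. exact: ComplexField.Normc.normcM. Qed.

Lemma nci : nc 'i = 1.
Proof. by rewrite /ComplexField.Normc.normc /= expr0n add0r expr1n sqrtr1. Qed.

Lemma Pe_Ez (z : C) : (fun n => Pe n z) @ \oo --> Ez z.
Proof.
set x := complex.Re z; set y := complex.Im z.
have ez : z = x%:C + 'i * y%:C by rewrite /x /y; exact: complexE.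
have -> : (fun n => Pe n z) = (fun n => Pe n (x%:C : C) * Pe n ('i * y%:C : C)
     - Dn n (x%:C : C) ('i * y%:C : C)).
  by apply/funext => n; rewrite -Pe_cauchy -ez opprB addrC subrK.
have -> : Ez z = (expR x)%:C * ((cos y)%:C + 'i * (sin y)%:C) - 0.
  rewrite subr0 /Ez -/x -/y; apply/eqP; rewrite eq_complex /=.
  by apply/andP; split; apply/eqP; ring.
apply: cvgB; first apply: cvgM.
- have -> : (fun n => Pe n (x%:C : C)) = (fun n => (Pe n x)%:C).
    by apply/funext => n; rewrite (Pe_morph (real_complex R)).
  apply: cvgC; exact: Pe_exp.
- exact: Pe_cis.
apply: (@cvgC0 _ _ (fun n => Dn n `|x| `|y|)); last exact: Dn_real0.
move=> n; have := Dn_norm n (x%:C : C) ('i * y%:C).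
rewrite !normCE ncM nci mul1r !normcR -(Dn_morph (real_complex R)).
by rewrite lecR.
Qed.

End Cx.

End chunk_c4.

Section chunk_c5.
Local Open Scope classical_set_scope.
Local Open Scope complex_scope.
Local Open Scope ring_scope.

Section Cx.
Variable R : realType.
Local Notation C := (Num.NumField.sort (R[i] : numFieldType)).
Local Notation nc := (@ComplexField.Normc.normc R).

Lemma EzD (a b : C) : Ez (a + b) = Ez a * Ez b.
Proof.
case: a => a1 a2; case: b => b1 b2; rewrite /Ez /= expRD cosD sinD.
by apply/eqP; rewrite eq_complex /=; apply/andP; split; apply/eqP; ring.
Qed.

Lemma Ez0 : Ez (0 : C) = 1.
Proof. by rewrite /Ez /= expR0 cos0 sin0 mulr1 mulr0. Qed.

Lemma nc_cvg (f : nat -> C) (l : C) : f @ \oo --> l -> (fun n => nc (f n)) @ \oo --> nc l.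
Proof.
move/cvgrPdist_lt => h; apply/cvgrPdist_lt => e e0.
have e0' : (0 : C) < e%:C by rewrite ltcR.
move: (h _ e0'); apply: filterS => n.
rewrite normCE ltcR => hn.
apply: le_lt_trans hn.
have h1 := le_normcD (f n - l) l; have h2 := le_normcD (l - f n) (f n).
rewrite subrK in h1; rewrite subrK in h2.
have h3 : nc (f n - l) = nc (l - f n) by rewrite -normcN opprB.
rewrite ler_norml; apply/andP; split; lra.
Qed.

Lemma Pe1_norm (F : numFieldType) n (a : F) : `|Pe n.+1 a - 1| <= Pe n.+1 `|a| - 1.
Proof.
rewrite /Pe !big_ord_recl /= !expr0 fact0 divr1 ![1 + _]addrC !addrK.
apply: le_trans (ler_norm_sum _ _ _) _; apply: ler_sum => i _.
by rewrite normrM normfV normr_nat normrX.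
Qed.

Lemma ncEz_1 (z : C) : nc (Ez z - 1) <= expR (nc z) - 1.
Proof.
have h1 : (fun n => Pe n z - 1) @ \oo --> Ez z - 1.
  exact: (cvgB (@Pe_Ez _ z) (cvg_cst (1:C))).
have h2 : (fun n => Pe n (nc z) - 1) @ \oo --> expR (nc z) - 1.
  exact: (cvgB (@Pe_exp _ (nc z)) (cvg_cst (1:R))).
apply: (ler_cvg_to (nc_cvg h1) h2).
exists 1%N => // -[|n] //= _.
have := Pe1_norm n z; rewrite normCE -(Pe_morph (real_complex R)).
by rewrite -(rmorph1 (real_complex R)) -rmorphB lecR.
Qed.

Lemma Re_le_nc (z : C) : complex.Re z <= nc z.
Proof.
apply: le_trans (ler_norm _) _.
rewrite /ComplexField.Normc.normc; case: z => x y /=.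
rewrite -sqrtr_sqr ler_sqrt ?lerDl ?sqr_ge0 //.
by rewrite addr_ge0 ?sqr_ge0.
Qed.

Lemma ncEz (z : C) : nc (Ez z) = expR (complex.Re z).
Proof.
rewrite /ComplexField.Normc.normc /Ez /=.
have -> : (expR (complex.Re z) * cos (complex.Im z)) ^+ 2 + (expR (complex.Re z) * sin (complex.Im z)) ^+ 2
   = expR (complex.Re z) ^+ 2 by rewrite !exprMn -mulrDr cos2Dsin2 mulr1.
by rewrite sqrtr_sqr ger0_norm // expR_ge0.
Qed.

Lemma ncEz_le (z : C) : nc (Ez z) <= expR (nc z).
Proof. by rewrite ncEz ler_expR Re_le_nc. Qed.

Lemma expR_sub1 (s : R) : expR s - 1 <= s * expR s.
Proof.
have h := expR_ge1Dx (- s).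
have e1 : expR s * expR (- s) = 1 := expRxMexpNx_1 s.
have hp := expR_ge0 s.
nra.
Qed.

Lemma expR1_le4 : expR (1 : R) <= 4%:R.
Proof.
have h := expR_ge1Dx (- (2%:R^-1) : R).
have e1 := expRxMexpNx_1 (2%:R^-1 : R).
have e2 : expR (1 : R) = expR (2%:R^-1) * expR (2%:R^-1).
  by rewrite -expRD; congr (expR _); field.
have hp := expR_ge0 (2%:R^-1 : R).
have hq := expR_ge0 (- 2%:R^-1 : R).
rewrite e2.
have : expR (2%:R^-1 : R) <= 2%:R by nra.
move=> h2; nra.
Qed.

Lemma ncN (z : C) : nc (- z) = nc z.
Proof. exact: normcN. Qed.

End Cx.

End chunk_c5.

Section chunk_c6.
Local Open Scope classical_set_scope.
Local Open Scope complex_scope.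
Local Open Scope ring_scope.

Section Mx.
Variable R : realType.
Local Notation C := (Num.NumField.sort (R[i] : numFieldType)).
Local Notation nc := (@ComplexField.Normc.normc R).
Local Notation MC := ('M[R[i]]_2).

Definition Jm : MC := \matrix_(i < 2, j < 2) (if i == j then (if i == 0 then 1 else -1) else 0).
Definition Tm : MC := \matrix_(i < 2, j < 2) (if i == j then 0 else (if i == 0 then -1 else 1)).
Definition Km : MC := \matrix_(i < 2, j < 2) (if i == j then 0 else 1).

Lemma Xm_J : Xm R = 2%:R^-1 *: Jm.
Proof. mx2. all: ring. Qed.

Lemma JJ : Jm * Jm = 1.
Proof. rewrite -mulmxE; mx2. all: ring. Qed.

Lemma KK : Km * Km = 1.
Proof. rewrite -mulmxE; mx2. all: ring. Qed.

End Mx.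

End chunk_c6.

Section chunk_c7.
Local Open Scope classical_set_scope.
Local Open Scope complex_scope.
Local Open Scope ring_scope.

Section G.
Variable R : realType.
Local Notation C := (Num.NumField.sort (R[i] : numFieldType)).
Local Notation nc := (@ComplexField.Normc.normc R).
Local Notation MC := ('M[R[i]]_2).

Definition chz (u : C) : C := (Ez u + Ez (- u)) / 2.
Definition shz (u : C) : C := (Ez u - Ez (- u)) / 2.

Lemma powM2 (M : MC) m : M * M = 1 -> M ^+ (m.*2) = 1.
Proof. by move=> h; rewrite -mul2n exprM expr2 h expr1n. Qed.

Lemma exp_term (mu : C) (M : MC) k : M * M = 1 ->
  (k`!%:R)^-1 *: (mu *: M) ^+ k =
  ((mu ^+ k / k`!%:R + (- mu) ^+ k / k`!%:R) / 2) *: 1 +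
  ((mu ^+ k / k`!%:R - (- mu) ^+ k / k`!%:R) / 2) *: M.
Proof.
move=> hM; rewrite exprZn scalerA.
have := odd_double_half k; case: (odd k) => /= <-; move: (k./2) => m;
have sg : (-1 : C) ^+ (m.*2) = 1 by rewrite -mul2n exprM sqrrN !expr1n.
- rewrite add1n [M ^+ _]exprS (powM2 _ hM) mulr1 exprNn [(-1) ^+ _]exprS sg mulr1.
  have -> : (mu ^+ m.*2.+1 / m.*2.+1`!%:R +
     -1 * mu ^+ m.*2.+1 / m.*2.+1`!%:R) / 2 = 0 by ring.
  rewrite scale0r add0r; congr (_ *: _); field.
  by rewrite fact_neq0.
- rewrite add0n (powM2 _ hM) exprNn sg mul1r.
  have -> : (mu ^+ m.*2 / m.*2`!%:R -
     mu ^+ m.*2 / m.*2`!%:R) / 2 = 0 by ring.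
  rewrite scale0r addr0; congr (_ *: _); field.
  by rewrite fact_neq0.
Qed.

Lemma mexp_inv (mu : C) (M : MC) : M * M = 1 ->
  mexp (mu *: M) = chz mu *: 1 + shz mu *: M.
Proof.
move=> hM; rewrite /mexp.
have -> : series (fun k => (k`!%:R)^-1 *: (mu *: M) ^+ k) =
   (fun n => ((Pe n mu + Pe n (- mu)) / 2) *: (1 : MC) + ((Pe n mu - Pe n (- mu)) / 2) *: M).
  apply/funext => n; rewrite /series /= big_mkord.
  under eq_bigr do rewrite (exp_term _ _ hM).
  rewrite big_split /= -!scaler_suml.
  by rewrite /Pe big_split sumrB.
apply: (@cvg_lim _ (@norm_hausdorff _ _)) => /=.
apply: cvgD; apply: cvgZ; try exact: cvg_cst.
- apply: cvgM; last exact: cvg_cst.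
  by apply: cvgD; exact: Pe_Ez.
- apply: cvgM; last exact: cvg_cst.
  by apply: cvgB; exact: Pe_Ez.
Qed.

End G.

End chunk_c7.

Section chunk_c8.
Local Open Scope classical_set_scope.
Local Open Scope complex_scope.
Local Open Scope ring_scope.

Section Th.
Variable R : realType.
Local Notation C := (Num.NumField.sort (R[i] : numFieldType)).
Local Notation nc := (@ComplexField.Normc.normc R).
Local Notation MC := ('M[R[i]]_2).

Definition mx22 (a b c d : C) : MC :=
  \matrix_(i < 2, j < 2) (if i == 0 then (if j == 0 then a else b) else (if j == 0 then c else d)).

Lemma cisE (a b : R) : a +i* b = a%:C + 'i * b%:C :> C.
Proof. by apply/eqP; rewrite eq_complex /=; apply/andP; split; apply/eqP; ring. Qed.

Lemma Ez_iy (y : R) : Ez ('i * y%:C : C) = (cos y)%:C + 'i * (sin y)%:C.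
Proof.
rewrite /Ez /= !(mul0r, mul1r, subr0, addr0, add0r, expR0) -cisE.
by rewrite oppr0 expR0 !mul1r.
Qed.

Lemma rcN (x : R) : (- x)%:C = - x%:C :> C.
Proof. by apply/eqP; rewrite eq_complex /= oppr0 !eqxx. Qed.

Lemma chzN (u : C) : chz (- u) = chz u.
Proof. by rewrite /chz opprK addrC. Qed.

Lemma shzN (u : C) : shz (- u) = - shz u.
Proof. by rewrite /shz opprK -mulNr opprB. Qed.

Lemma chz_iy (y : R) : chz ('i * y%:C) = (cos y)%:C.
Proof.
rewrite /chz -mulrN -rcN Ez_iy Ez_iy cosN sinN rcN.
by field; rewrite ?pnatr_eq0.
Qed.

Lemma shz_iy (y : R) : shz ('i * y%:C) = 'i * (sin y)%:C.
Proof.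
rewrite /shz -mulrN -rcN Ez_iy Ez_iy cosN sinN rcN.
by field; rewrite ?pnatr_eq0.
Qed.

Lemma thetaT : thetam R = 2%:R^-1 *: Tm R.
Proof. mx2. all: ring. Qed.

Lemma TT : Tm R * Tm R = -1.
Proof. rewrite -mulmxE; mx2. all: ring. Qed.

Lemma iT2 : ((- 'i) *: Tm R) * ((- 'i) *: Tm R) = 1.
Proof. by rewrite -scalerAl -scalerAr scalerA mulrNN -expr2 sqr_i TT scaleN1r opprK. Qed.

End Th.

End chunk_c8.

Section chunk_c8b.
Local Open Scope classical_set_scope.
Local Open Scope complex_scope.
Local Open Scope ring_scope.

Section M22.
Variable R : realType.
Local Notation C := (Num.NumField.sort (R[i] : numFieldType)).
Local Notation MC := ('M[R[i]]_2).

Lemma mx22_mul (a b c d e f g h : C) :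
  mx22 a b c d *m mx22 e f g h = mx22 (a*e + b*g) (a*f + b*h) (c*e + d*g) (c*f + d*h).
Proof. mx2. all: ring. Qed.

Lemma mx22_add (a b c d e f g h : C) :
  mx22 a b c d + mx22 e f g h = mx22 (a + e) (b + f) (c + g) (d + h).
Proof. mx2. Qed.

Lemma mx22_opp (a b c d : C) : - mx22 a b c d = mx22 (- a) (- b) (- c) (- d).
Proof. mx2. Qed.

Lemma mx22_scale (k a b c d : C) : k *: mx22 a b c d = mx22 (k * a) (k * b) (k * c) (k * d).
Proof. mx2. Qed.

Lemma mx22_one : (1 : MC) = mx22 1 0 0 1.
Proof. mx2. Qed.

Lemma mx22_K : Km R = mx22 0 1 1 0.
Proof. mx2. Qed.

Lemma mx22_J : Jm R = mx22 1 0 0 (-1).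
Proof. mx2. Qed.

Lemma mx22_T : Tm R = mx22 0 (-1) 1 0.
Proof. mx2. Qed.

End M22.

End chunk_c8b.

Ltac m22 := rewrite ?mx22_one ?mx22_K ?mx22_J ?mx22_T;
  rewrite ?(mx22_scale, mx22_opp, mx22_add, mx22_mul); congr mx22.

Section chunk_c9.
Local Open Scope classical_set_scope.
Local Open Scope complex_scope.
Local Open Scope ring_scope.

Section Y.
Variable R : realType.
Local Notation C := (Num.NumField.sort (R[i] : numFieldType)).
Local Notation nc := (@ComplexField.Normc.normc R).
Local Notation MC := ('M[R[i]]_2).

Let y : R := pi / 2 / 2.

Lemma iyi (x : C) : ('i * x) * (- 'i) = x.
Proof. by rewrite mulrC mulrA mulNr -expr2 sqr_i opprK mul1r. Qed.

Lemma yC : ((pi : R) / 2)%:C * 2%:R^-1 = y%:C :> C.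
Proof. by rewrite /y [in RHS]rmorphM; congr (_ * _); rewrite fmorphV rmorph_nat. Qed.

Lemma mexp_thP : mexp (((pi : R) / 2)%:C *: thetam R) = (cos y)%:C *: 1 + (sin y)%:C *: Tm R.
Proof.
rewrite thetaT scalerA yC -(iyi y%:C) -scalerA mexp_inv; last exact: iT2.
by rewrite chz_iy shz_iy scalerA iyi.
Qed.

Lemma mexp_thN : mexp ((- ((pi : R) / 2))%:C *: thetam R) = (cos y)%:C *: 1 - (sin y)%:C *: Tm R.
Proof.
rewrite thetaT scalerA rcN mulNr yC -(iyi y%:C) -mulNr -scalerA mexp_inv; last exact: iT2.
by rewrite chzN shzN chz_iy shz_iy scalerA mulNr iyi scaleNr.
Qed.

Lemma Ygen (c s : C) :
  (c *: 1 + s *: Tm R) *m (2%:R^-1 *: Jm R) *m (c *: 1 - s *: Tm R) =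
  2%:R^-1 *: mx22 (c ^+ 2 - s ^+ 2) (2%:R * c * s) (2%:R * c * s) (s ^+ 2 - c ^+ 2).
Proof. m22. all: ring. Qed.

Lemma cs_facts : (cos y)%:C ^+ 2 - (sin y)%:C ^+ 2 = 0 :> C /\ 2%:R * (cos y)%:C * (sin y)%:C = 1 :> C.
Proof.
have hyy : y + y = pi / 2 by rewrite /y -splitr.
have h1 := cosD y y; have h2 := sinD y y.
rewrite hyy cos_pihalf in h1; rewrite hyy sin_pihalf in h2.
split.
- rewrite -!rmorphXn -rmorphB; apply/eqP; rewrite -(rmorph0 (real_complex R)) (inj_eq (@complexI _)).
  by apply/eqP; rewrite !expr2 -h1.
- rewrite -(rmorph_nat (real_complex R) 2) -!rmorphM; apply/eqP; rewrite -(rmorph1 (real_complex R)) (inj_eq (@complexI _)).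
  by apply/eqP; rewrite [RHS]h2; ring.
Qed.

Lemma Ym_K : Ym R = 2%:R^-1 *: Km R.
Proof.
rewrite /Ym mexp_thP mexp_thN Xm_J Ygen.
have [h1 h2] := cs_facts.
have h3 : (sin y)%:C ^+ 2 - (cos y)%:C ^+ 2 = 0 :> C by rewrite -opprB h1 oppr0.
rewrite h1 h2 h3; congr (_ *: _); mx2.
Qed.

End Y.

End chunk_c9.

Section chunk_c10.
Local Open Scope classical_set_scope.
Local Open Scope complex_scope.
Local Open Scope ring_scope.

Section Mb.
Variable R : realType.
Local Notation C := (Num.NumField.sort (R[i] : numFieldType)).
Local Notation nc := (@ComplexField.Normc.normc R).
Local Notation MC := ('M[R[i]]_2).

Lemma opY (b : C) : oneparam (Ym R) b = chz (b / 2) *: 1 + shz (b / 2) *: Km R.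
Proof. by rewrite /oneparam Ym_K scalerA mexp_inv //; exact: KK. Qed.

Lemma opX (a : C) : oneparam (Xm R) a = chz (a / 2) *: 1 + shz (a / 2) *: Jm R.
Proof. by rewrite /oneparam Xm_J scalerA mexp_inv //; exact: JJ. Qed.

Lemma Mgen (c s p q : C) :
  (c *: 1 + s *: Km R) *m (p *: 1 + q *: Jm R) *m (c *: 1 + (- s) *: Km R) =
  mx22 (p * (c ^+ 2 - s ^+ 2) + q * (c ^+ 2 + s ^+ 2)) (- (q * (2%:R * c * s)))
       (q * (2%:R * c * s)) (p * (c ^+ 2 - s ^+ 2) - q * (c ^+ 2 + s ^+ 2)).
Proof. m22. all: ring. Qed.

Lemma ch_sh_ids (b : C) :
  [/\ chz (b / 2) ^+ 2 - shz (b / 2) ^+ 2 = 1,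
      chz (b / 2) ^+ 2 + shz (b / 2) ^+ 2 = chz b &
      2%:R * chz (b / 2) * shz (b / 2) = shz b].
Proof.
set u := b / 2.
have hub : u + u = b by rewrite /u -splitr.
have h11 : Ez u * Ez u = Ez b by rewrite -EzD hub.
have h22 : Ez (- u) * Ez (- u) = Ez (- b) by rewrite -EzD -opprD hub.
have h12 : Ez u * Ez (- u) = 1 by rewrite -EzD subrr Ez0.
rewrite /chz /shz; split.
- have -> : ((Ez u + Ez (- u)) / 2) ^+ 2 - ((Ez u - Ez (- u)) / 2) ^+ 2 = Ez u * Ez (- u).
    by field; rewrite ?pnatr_eq0.
  exact: h12.
- have -> : ((Ez u + Ez (- u)) / 2) ^+ 2 + ((Ez u - Ez (- u)) / 2) ^+ 2 =
     (Ez u * Ez u + Ez (- u) * Ez (- u)) / 2.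
    by field; rewrite ?pnatr_eq0.
  by rewrite h11 h22.
- have -> : 2%:R * ((Ez u + Ez (- u)) / 2) * ((Ez u - Ez (- u)) / 2) =
     (Ez u * Ez u - Ez (- u) * Ez (- u)) / 2.
    by field; rewrite ?pnatr_eq0.
  by rewrite h11 h22.
Qed.

Lemma Mb_formula (a b : C) :
  oneparam (Ym R) b *m oneparam (Xm R) a *m oneparam (Ym R) (- b) =
  mx22 (chz (a / 2) + shz (a / 2) * chz b) (- (shz (a / 2) * shz b))
       (shz (a / 2) * shz b) (chz (a / 2) - shz (a / 2) * chz b).
Proof.
rewrite opY opX opY mulNr chzN shzN Mgen.
have [h1 h2 h3] := ch_sh_ids b.
by rewrite h1 h2 h3 !mulr1.
Qed.

Lemma Mdiff (a b b' : R[i]) :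
  oneparam (Ym R) b *m oneparam (Xm R) a *m oneparam (Ym R) (- b)
  - oneparam (Ym R) b' *m oneparam (Xm R) a *m oneparam (Ym R) (- b') =
  mx22 (shz (a / 2) * (chz b - chz b')) (- (shz (a / 2) * (shz b - shz b')))
       (shz (a / 2) * (shz b - shz b')) (- (shz (a / 2) * (chz b - chz b'))).
Proof.
apply: (etrans (congr2 (fun P Q => P - Q) (Mb_formula a b) (Mb_formula a b'))).
rewrite mx22_opp mx22_add. congr mx22. (ring). ring. ring. ring. Qed.
End Mb.

End chunk_c10.

Section chunk_c11.
Local Open Scope classical_set_scope.
Local Open Scope complex_scope.
Local Open Scope ring_scope.

Section Nrm.
Variable R : realType.
Local Notation C := (Num.NumField.sort (R[i] : numFieldType)).
Local Notation nc := (@ComplexField.Normc.normc R).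

Lemma hnormE (w : 'cV[R[i]]_2) : hnorm w = Num.sqrt (nc (w ord0 0) ^+ 2 + nc (w (lift ord0 ord0) 0) ^+ 2).
Proof. by rewrite /hnorm !big_ord_recl big_ord0 addr0 /cabs. Qed.

Lemma nc_ge0 (z : C) : 0 <= nc z.
Proof. by case: z => ? ?; rewrite /ComplexField.Normc.normc sqrtr_ge0. Qed.

Lemma nc_lin (al be v0 v1 : C) : nc (al * v0 + - be * v1) <= nc al * nc v0 + nc be * nc v1.
Proof.
apply: le_trans (le_normcD _ _) _.
by rewrite mulNr normcN !ncM.
Qed.

Lemma opnorm_mx22 (al be : C) (B : R) : nc al + nc be <= B ->
  opnorm (mx22 al (- be) be (- al)) <= B.
Proof.
move=> hB; rewrite /opnorm; apply: ge_sup.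
  pose e0 : 'cV[R[i]]_2 := \col_i (if i == 0 then 1 else 0).
  exists (hnorm (mx22 al (- be) be (- al) *m e0)); exists e0 => //.
  rewrite /=.
  rewrite hnormE /e0 !mxE /=.
  by do 3 rewrite ?(expr0n, expr1n, addr0, sqrtr0, sqrtr1) /=.
move=> x [v /= hv <-].
rewrite hnormE in hv; rewrite hnormE !mxE !big_ord_recl !big_ord0 !addr0 !mxE /=.
have h1 := nc_lin al be (v ord0 0) (v (lift ord0 ord0) 0).
have h2 := nc_lin be al (v ord0 0) (v (lift ord0 ord0) 0).
set x0 := nc (v ord0 0) in hv h1 h2 *; set x1 := nc (v (lift ord0 ord0) 0) in hv h1 h2 *.
have hx0 : 0 <= x0 by exact: nc_ge0.
have hx1 : 0 <= x1 by exact: nc_ge0.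
have hxx : x0 ^+ 2 + x1 ^+ 2 = 1.
  by rewrite -[LHS]sqr_sqrtr ?hv ?expr1n // addr_ge0 ?sqr_ge0.
have ha := nc_ge0 al; have hb := nc_ge0 be.
set X := nc _ in h1 *; set Y := nc _ in h2 *.
have hX : 0 <= X by exact: nc_ge0.
have hY : 0 <= Y by exact: nc_ge0.
have hB0 : 0 <= B by apply: le_trans hB; rewrite addr_ge0.
rewrite -(ger0_norm hB0) -sqrtr_sqr ler_sqrt ?sqr_ge0 //.
have hX2 : X ^+ 2 <= (nc al * x0 + nc be * x1) ^+ 2 by rewrite ler_pXn2r // ?nnegrE ?addr_ge0 ?mulr_ge0.
have hY2 : Y ^+ 2 <= (nc be * x0 + nc al * x1) ^+ 2 by rewrite ler_pXn2r // ?nnegrE ?addr_ge0 ?mulr_ge0.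
have hS : (nc al * x0 + nc be * x1) ^+ 2 + (nc be * x0 + nc al * x1) ^+ 2 <= (nc al + nc be) ^+ 2.
  have hxy : 2%:R * x0 * x1 <= 1.
    have := sqr_ge0 (x0 - x1).
    have -> : (x0 - x1) ^+ 2 = (x0 ^+ 2 + x1 ^+ 2) - 2%:R * x0 * x1 by ring.
    rewrite hxx; lra.
  have hab : 0 <= nc al * nc be by rewrite mulr_ge0.
  have hab2 : nc al * nc be * (2%:R * x0 * x1) <= nc al * nc be.
    by rewrite -[X in _ <= X]mulr1 ler_wpM2l.
  have -> : (nc al * x0 + nc be * x1) ^+ 2 + (nc be * x0 + nc al * x1) ^+ 2 =
    (nc al ^+ 2 + nc be ^+ 2) * (x0 ^+ 2 + x1 ^+ 2) + 2%:R * (nc al * nc be * (2%:R * x0 * x1)) by ring.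
  have -> : (nc al + nc be) ^+ 2 = nc al ^+ 2 + nc be ^+ 2 + 2%:R * (nc al * nc be) by ring.
  rewrite hxx mulr1; lra.
have hB2 : (nc al + nc be) ^+ 2 <= B ^+ 2 by rewrite ler_pXn2r // ?nnegrE ?addr_ge0.
lra.
Qed.

End Nrm.

End chunk_c11.

Section chunk_c12.
Local Open Scope classical_set_scope.
Local Open Scope complex_scope.
Local Open Scope ring_scope.
Section Fin.
Variable R : realType.
Local Notation C := (Num.NumField.sort (R[i] : numFieldType)).
Local Notation nc := (@ComplexField.Normc.normc R).

Lemma nc2 : nc (2%:R : C) = 2%:R.
Proof. by rewrite normcMn ComplexField.Normc.normc1. Qed.

Lemma nc_half (x : C) : nc (x / 2%:R) = nc x / 2%:R.
Proof. by rewrite ncM ComplexField.Normc.normcV nc2. Qed.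

Lemma nc_sub (x y : C) : nc (x - y) <= nc x + nc y.
Proof. by apply: le_trans (le_normcD _ _) _; rewrite normcN. Qed.

Lemma bound_q (u : C) : nc (shz u) <= nc u * expR (nc u).
Proof.
rewrite /shz nc_half.
have -> : Ez u - Ez (- u) = (Ez u - 1) - (Ez (- u) - 1) by rewrite opprB addrA subrK.
have h1 := ncEz_1 u; have h2 := ncEz_1 (- u); rewrite normcN in h2.
have h3 := nc_sub (Ez u - 1) (Ez (- u) - 1).
have h4 := expR_sub1 (nc u).
lra.
Qed.

Lemma bound_q2 (x : C) : nc (shz (x / 2%:R)) <= nc x / 2%:R * expR (nc x / 2%:R).
Proof. by rewrite -[nc x / 2%:R]nc_half; exact: bound_q. Qed.

Lemma bound_E (b b' : C) : nc (Ez b - Ez b') <= expR (nc b) * (expR (nc (b' - b)) - 1).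
Proof.
have -> : Ez b - Ez b' = Ez b * - (Ez (b' - b) - 1).
  have e : Ez b * Ez (b' - b) = Ez b' by rewrite -EzD addrC subrK.
  by rewrite mulrN mulrBr mulr1 e opprB.
rewrite ncM normcN; apply: ler_pM; rewrite ?nc_ge0 //; [exact: ncEz_le | exact: ncEz_1].
Qed.

Lemma bound_diff (b b' : C) (d : R) : nc (b' - b) = d ->
  nc (chz b - chz b') <= expR (nc b) * (expR d - 1) /\
  nc (shz b - shz b') <= expR (nc b) * (expR d - 1).
Proof.
move=> hd.
have h1 := bound_E b b'; rewrite hd in h1.
have e : - b' - - b = - (b' - b) by rewrite opprB opprK addrC.
have h2 := bound_E (- b) (- b'); rewrite e !normcN hd in h2.
have h3 := nc_sub (Ez b - Ez b') (Ez (- b) - Ez (- b')).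
have h4 := le_normcD (Ez b - Ez b') (Ez (- b) - Ez (- b')).
have -> : chz b - chz b' = ((Ez b - Ez b') + (Ez (- b) - Ez (- b'))) / 2%:R.
  by rewrite /chz; field; rewrite ?pnatr_eq0.
have -> : shz b - shz b' = ((Ez b - Ez b') - (Ez (- b) - Ez (- b'))) / 2%:R.
  by rewrite /shz; field; rewrite ?pnatr_eq0.
rewrite !nc_half; split; lra.
Qed.

End Fin.


End chunk_c12.

Unset Implicit Arguments.

Theorem lemmaA5 (R : realType) (a b b' : R[i]) (A : R) :
  0 < A ->
  cabs (b' - b) <= 1 ->
  cabs a * expR (cabs b) <= A ->
  opnorm (oneparam (Ym R) b *m oneparam (Xm R) a *m oneparam (Ym R) (- b)
          - oneparam (Ym R) b' *m oneparam (Xm R) a *m oneparam (Ym R) (- b'))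
  <= 10%:R * expR A * cabs a * expR (cabs b) * cabs (b' - b).
Proof.
move=> hA hd hab.
have E := Mdiff a b b'.
rewrite E; apply: opnorm_mx22.
rewrite /cabs in hd hab *.
set na := ComplexField.Normc.normc a in hab *.
set nb := ComplexField.Normc.normc b in hab *.
set d := ComplexField.Normc.normc (b' - b) in hd *.
have [hc hs] := bound_diff (erefl d).
have hq := bound_q2 a; rewrite -/na in hq.
set q := shz (a / 2%:R) in hq *.
rewrite (ncM q (chz b - chz b')) (ncM q (shz b - shz b')).
have hna : 0 <= na by exact: nc_ge0.
have hnb : 0 <= nb by exact: nc_ge0.
have hd0 : 0 <= d by exact: nc_ge0.
have hq0 : 0 <= ComplexField.Normc.normc q by exact: nc_ge0.
have hEb : 1 <= expR nb by apply: le_trans (expR_ge1Dx nb); lra.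
have hEd : expR d <= 4%:R by apply: le_trans (expR1_le4 R); rewrite ler_expR.
have hed : expR d - 1 <= 4%:R * d.
  have := expR_sub1 d; have := expR_ge0 d; nra.
have hnaA : na / 2%:R <= A by nra.
have heA : expR (na / 2%:R) <= expR A by rewrite ler_expR.
set P := expR nb * (expR d - 1) in hc hs.
have hP : 0 <= P by rewrite mulr_ge0 ?expR_ge0 // subr_ge0 -expR0 ler_expR.
have s1 : ComplexField.Normc.normc q * ComplexField.Normc.normc (chz b - chz b') +
          ComplexField.Normc.normc q * ComplexField.Normc.normc (shz b - shz b') <=
          ComplexField.Normc.normc q * (2%:R * P).
  rewrite -mulrDr ler_wpM2l //; lra.
apply: le_trans s1 _.
have s3 : P <= expR nb * (4%:R * d) by rewrite ler_wpM2l ?expR_ge0.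
have s4 : ComplexField.Normc.normc q * (2%:R * P) <=
          (na / 2%:R * expR (na / 2%:R)) * (2%:R * (expR nb * (4%:R * d))).
  apply: ler_pM; [exact: hq0 | by rewrite mulr_ge0 | exact: hq | lra].
apply: le_trans s4 _.
have -> : na / 2%:R * expR (na / 2%:R) * (2%:R * (expR nb * (4%:R * d))) =
          (4%:R * expR (na / 2%:R)) * (na * expR nb * d) by field.
have -> : 10%:R * expR A * na * expR nb * d = (10%:R * expR A) * (na * expR nb * d) by ring.
apply: ler_wpM2r; first by rewrite !mulr_ge0 ?expR_ge0.
have := expR_ge0 A; lra.
Qed.
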